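(* Let $d\in\mathrm{End}^1(E)$ and $\delta\in\mathrm{End}^{-1}(E)$ with $d^2=\delta^2=0$, and assume $[d,\delta]=d\delta+\delta d$ is invertible, so that $d$ and $\delta$ are exact. Then $$\prod_{i=p}^q\det\big([d,\delta]|_{E^i}\big)^{(-1)^i}=1 ,$$ and the ratio of the nonzero elements $\tau(d),\tau(\delta)$ of the even line $\det E$ is $$\tau(d)\otimes\tau(\delta)^{-1}=\prod_{i=p}^q\det\big([d,\delta]|_{E^i}\big)^{(-1)^i\,i} .$$ In particular, if $[d,\delta]=1$ then $\tau(d)=\tau(\delta)$.
   Context: $E=\bigoplus_{i=p}^qE^i$ is a finite-dimensional complex $\mathbb Z$-graded vector space. Determinant lines follow Knudsen–Mumford: $\det V=\Lambda^{\max}V$ with parity $\dim V$, and $\det E=\bigotimes_{i=p}^q(\det E^i)^{(-1)^i}$ (ordered). When a differential is exact, $\det E$ is even. For an exact degree-$1$ differential $d$, $$\tau(d)=\bigotimes_{i=p}^q(d\sigma^{i-1}\wedge\sigma^i)^{(-1)^i},$$ with $\sigma^i$ a nonzero element of $\Lambda^{\max}$ of a complement of $dE^{i-1}$ in $E^i$ ($\sigma^{p-1}=1$). For an exact degree-$(-1)$ differential $\delta$, $$\tau(\delta)=\bigotimes_{i=p}^q(\rho^i\wedge\delta\rho^{i+1})^{(-1)^i},$$ with $\rho^i$ a nonzero element of $\Lambda^{\max}$ of a complement of $\delta E^{i+1}$ in $E^i$ ($\rho^{q+1}=1$). For odd $i$, inverses of wedge products $a\wedge b$ are read as $a^{-1}_{\mathrm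 r}\wedge b^{-1}_{\mathrm l}$ (right, respectively left, graded inverses). Both sections are nonzero and independent of choices. *)

(* Defs.v *)
From HB Require Import structures.
From mathcomp Require Import all_boot all_order all_algebra.
From mathcomp Require Import complex Rstruct.
Import ComplexField.
Set Implicit Arguments. Unset Strict Implicit. Unset Printing Implicit Defensive.
Import Order.TTheory GRing.Theory Num.Theory.
Local Open Scope ring_scope.

Definition C : Type := (Rdefinitions.R)[i].

(* The graded space E = \oplus_{i=p}^{q} E^i is encoded by
   k := i - p in {0..N}, N = q - p; E^k = C^(n k) (row vectors), with
   n k = 0 for k > N.  A degree-1 map d is a family d k : E^k -> E^{k+1},
   acting on row vectors by v |-> v *m d k; a degree-(-1) map delta is a
   family delta k : E^{k+1} -> E^k. *)

Section Defs.
Variable n : nat -> nat.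
Variable d : forall k, 'M[C]_(n k, n k.+1).
Variable delta : forall k, 'M[C]_(n k.+1, n k).

Definition bracket (k : nat) : 'M[C]_(n k) :=
  match k return 'M[C]_(n k) with
  | 0 => d 0 *m delta 0
  | k'.+1 => d k'.+1 *m delta k'.+1 + delta k' *m d k'
  end.

Definition sqdet a b (A : 'M[C]_(a, b)) : C :=
  if a =P b is ReflectT e then \det (castmx (e, erefl b) A) else 0.

Definition imd (k : nat) : 'M[C]_(n k) :=
  match k return 'M[C]_(n k) with
  | 0 => 0
  | k'.+1 => (<< d k' >>)%MS
  end.

Definition imdelta (k : nat) : 'M[C]_(n k) := (<< delta k >>)%MS.

Definition compl_basis (k m : nat) (A : 'M[C]_(m, n k)) (S : 'M[C]_(n k)) :=
  [/\ row_free A, (A :&: S <= (0 : 'M[C]_(n k)))%MS & (1%:M <= A + S)%MS].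

(* sigma^k = wedge of the rows of c k; the factor d sigma^{k-1} /\ sigma^k,
   expressed as a scalar w.r.t. the standard volume element of E^k *)
Definition tau_d_factor (m : nat -> nat) (c : forall k, 'M[C]_(m k, n k))
  (k : nat) : C :=
  match k with
  | 0 => sqdet (c 0)
  | k'.+1 => sqdet (col_mx (c k' *m d k') (c k'.+1))
  end.

(* rho^k = wedge of the rows of r k; factor rho^k /\ delta rho^{k+1} *)
Definition tau_delta_factor (m : nat -> nat) (r : forall k, 'M[C]_(m k, n k))
  (k : nat) : C :=
  sqdet (col_mx (r k) (r k.+1 *m delta k)).

Definition sgnz (i : int) : int := (-1) ^ i.

(* tau(d), tau(delta) as scalars in det E trivialized by the standard bases *)
Definition tau_d (p : int) (N : nat) (m : nat -> nat)
  (c : forall k, 'M[C]_(m k, n k)) : C :=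
  \prod_(k < N.+1) tau_d_factor c k ^ sgnz (p + k%:Z).

Definition tau_delta (p : int) (N : nat) (m : nat -> nat)
  (r : forall k, 'M[C]_(m k, n k)) : C :=
  \prod_(k < N.+1) tau_delta_factor r k ^ sgnz (p + k%:Z).

End Defs.

(* Main.v *)
Require Import Defs.
From mathcomp Require Import all_boot all_order all_algebra.
From mathcomp Require Import complex Rstruct.
From mathcomp Require Import ring.
Import ComplexField.
Import GRing.Theory.
Local Open Scope ring_scope.
Set Implicit Arguments. Unset Strict Implicit.

Lemma sqdet_sq n (A : 'M[C]_n) : sqdet A = \det A.
Proof. by rewrite /sqdet; case: eqP => // e; rewrite castmx_id. Qed.

Lemma sqdet_neq a b (A : 'M[C]_(a, b)) : a <> b -> sqdet A = 0.
Proof. by rewrite /sqdet; case: eqP. Qed.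

Lemma sqdet_eq a b (A : 'M[C]_(a, b)) : sqdet A != 0 -> a = b.
Proof. by rewrite /sqdet; case: eqP => // _; rewrite eqxx. Qed.

Lemma sqdet_mulr r n (X : 'M[C]_(r, n)) (L : 'M[C]_n) :
  sqdet (X *m L) = sqdet X * \det L.
Proof.
case: (r =P n) => [e|ne]; last by rewrite !sqdet_neq // mul0r.
by subst r; rewrite !sqdet_sq det_mulmx.
Qed.

Lemma sqdet_mull r s c (M : 'M[C]_(r, s)) (X : 'M[C]_(s, c)) :
  sqdet X != 0 -> sqdet (M *m X) = sqdet M * sqdet X.
Proof.
move=> hX; have e := @sqdet_eq _ _ X hX; subst c.
by rewrite sqdet_sq -sqdet_mulr.
Qed.

Lemma sqdet_lblock a m b (A : 'M[C]_a) (Cm : 'M[C]_(m, a)) (D : 'M[C]_(m, b)) :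
  sqdet (block_mx A 0 Cm D) = \det A * sqdet D.
Proof.
case: (m =P b) => [e|ne].
  by subst m; rewrite !sqdet_sq det_lblock.
rewrite !sqdet_neq ?mulr0 //; by move/addnI.
Qed.

Lemma sqdet_ublock m b a (A : 'M[C]_(m, b)) (B : 'M[C]_(m, a)) (D : 'M[C]_a) :
  sqdet (block_mx A B 0 D) = sqdet A * \det D.
Proof.
case: (m =P b) => [e|ne].
  by subst m; rewrite !sqdet_sq det_ublock.
rewrite !sqdet_neq ?mul0r //; by move/addIn.
Qed.

Lemma sqdet_colU a b m n (S1 : 'M[C]_(a, n)) (S2 : 'M[C]_(b, n))
  (U : 'M[C]_(m, a)) (B : 'M[C]_(m, b)) :
  sqdet (col_mx S1 S2) != 0 ->
  sqdet (col_mx S1 (U *m S1 + B *m S2)) = sqdet B * sqdet (col_mx S1 S2).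
Proof.
move=> hW.
have -> : col_mx S1 (U *m S1 + B *m S2) = block_mx 1%:M 0 U B *m col_mx S1 S2.
  by rewrite mul_block_col mul1mx mul0mx addr0.
by rewrite sqdet_mull // sqdet_lblock det1 mul1r.
Qed.

Lemma sqdet_colA a b m n (S1 : 'M[C]_(a, n)) (S2 : 'M[C]_(b, n))
  (A : 'M[C]_(m, a)) (V : 'M[C]_(m, b)) :
  sqdet (col_mx S1 S2) != 0 ->
  sqdet (col_mx (A *m S1 + V *m S2) S2) = sqdet A * sqdet (col_mx S1 S2).
Proof.
move=> hW.
have -> : col_mx (A *m S1 + V *m S2) S2 = block_mx A V 0 1%:M *m col_mx S1 S2.
  by rewrite mul_block_col mul1mx mul0mx add0r.
by rewrite sqdet_mull // sqdet_ublock det1 mulr1.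
Qed.

Lemma sqdet_col0 m n (X : 'M[C]_(0, n)) (Y : 'M[C]_(m, n)) :
  sqdet (col_mx X Y) = sqdet Y.
Proof.
have -> : col_mx X Y = Y :> 'M[C]_(m, n).
  apply/matrixP=> i j; rewrite mxE; case: splitP => [[]//|k /= hk].
  by congr (Y _ j); apply: val_inj; rewrite /= hk.
done.
Qed.

Lemma sqdet_dsum a b n (S1 : 'M[C]_(a, n)) (S2 : 'M[C]_(b, n)) :
  row_free S1 -> row_free S2 -> (S1 :&: S2 <= (0 : 'M_n))%MS ->
  (1%:M <= S1 + S2)%MS -> sqdet (col_mx S1 S2) != 0.
Proof.
move=> f1 f2 hc hs.
have hr : \rank (S1 + S2) = (a + b)%N.
  rewrite mxrank_disjoint_sum; last by apply/eqP; rewrite -submx0.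
  by rewrite (eqP f1) (eqP f2).
have hf : \rank (S1 + S2) = n by apply/eqP; move: hs; rewrite sub1mx.
have e : n = (a + b)%N by rewrite -hf.
subst n.
rewrite sqdet_sq -unitfE -unitmxE -row_full_unit /row_full.
by rewrite -(addsmxE S1 S2) hr.
Qed.

Section Sc.
Variable F : fieldType.

Lemma expz_neq0 (x : F) (z : int) : x != 0 -> x ^ z != 0.
Proof. by move=> hx; rewrite expfz_eq0 negb_and hx orbT. Qed.

Lemma T1 (h f : nat -> F) (N : nat) : (forall k, h k != 0) -> (forall k, f k != 0) ->
  \prod_(k < N.+1) ((h k)^-1 * h k.+1 * (f k)^-1)
  = (h 0)^-1 * h N.+1 * \prod_(k < N.+1) (f k)^-1.
Proof.
move=> hh hf; elim: N => [|N IH]; first by rewrite !big_ord1.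
rewrite big_ord_recr IH /= [in RHS]big_ord_recr /=.
have := hh N.+1; have := hf N.+1; move=> h2 h1.
by field; rewrite ?hh ?hf.
Qed.

Definition fprev (f : nat -> F) k := if k is j.+1 then f j else 1.

Lemma T3 (f : nat -> F) (N : nat) : (forall k, f k != 0) ->
  \prod_(k < N.+1) ((fprev f k)^-1 * f k) = f N.
Proof.
move=> hf; elim: N => [|N IH]; first by rewrite big_ord1 /= invr1 mul1r.
rewrite big_ord_recr IH /=. have := hf N. move=> h1. by field; rewrite ?hh ?hf ?h1 ?h2 ?h3 ?h5.
Qed.

Lemma T2 (f : nat -> F) (p : int) (N : nat) : (forall k, f k != 0) ->
  \prod_(k < N.+1) ((fprev f k)^-1 * f k) ^ (p + k%:Z)
  = f N ^ (p + N%:Z) * \prod_(k < N) (f k)^-1.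
Proof.
move=> hf; elim: N => [|N IH]; first by rewrite big_ord1 big_ord0 /= invr1 mul1r mulr1.
rewrite big_ord_recr IH /= [in RHS]big_ord_recr /=.
have u1 : f N \is a GRing.unit by rewrite unitfE.
have u2 : f N.+1 \is a GRing.unit by rewrite unitfE.
have u3 : (f N)^-1 \is a GRing.unit by rewrite unitrV.
rewrite exprzMl // exprz_inv.
have -> : (p + N.+1%:Z) = (p + N%:Z) + 1 by rewrite -addrA -PoszD addn1.
have h3 := expfz_neq0 (p + N%:Z) (hf N).
move: h3 IH; move: (p + N%:Z) => q h3 IH.
rewrite opprD !exprzDr // ?expr1z ?exprN1 -invr_expz.
have := hf N; move=> h5. by field; rewrite ?h3 ?h5.
Qed.

End Sc.

Section Gen.
Variables (np n nn : nat).
Variables (D : 'M[C]_(np, n)) (d : 'M[C]_(n, nn)) (Dl : 'M[C]_(n, np)) (dl : 'M[C]_(nn, n)).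
Let L := d *m dl + Dl *m D.
Hypothesis hL : L \in unitmx.

Lemma dsum : (1%:M <= D + dl)%MS.
Proof.
have -> : (1%:M : 'M_n) = (invmx L *m Dl) *m D + (invmx L *m d) *m dl.
  by rewrite -!mulmxA -mulmxDr addrC mulVmx.
by apply: addmx_sub_adds; apply: submxMl.
Qed.

Lemma dcap : D *m d = 0 -> dl *m Dl = 0 -> (D :&: dl <= (0 : 'M_n))%MS.
Proof.
move=> hDd hdlDl; rewrite submx0; set v := (D :&: dl)%MS.
have /submxP [x hx] : (v <= D)%MS by apply: capmxSl.
have /submxP [y hy] : (v <= dl)%MS by apply: capmxSr.
have h0 : v *m L = 0.
  rewrite /L mulmxDr !mulmxA.
  by rewrite {1}hx {1}hy -(mulmxA x) hDd -(mulmxA y) hdlDl !mulmx0 !mul0mx addr0.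
by rewrite -(mulmxK hL v) h0 mul0mx.
Qed.

Lemma kerd nnn (d' : 'M[C]_(nn, nnn)) (dl' : 'M[C]_(nnn, nn)) :
  D *m d = 0 -> d *m d' = 0 -> d' *m dl' + dl *m d \in unitmx ->
  forall s (v : 'M[C]_(s, n)), v *m d = 0 -> (v <= D)%MS.
Proof.
move=> hDd hdd' hL' s v hv.
set w := v *m invmx L.
have hvw : v = w *m L by rewrite /w mulmxKV.
have hwd : w *m d = 0.
  apply: (can_inj (mulmxK hL')); rewrite mul0mx mulmxDr !mulmxA.
  rewrite -(mulmxA w d d') hdd' mulmx0 mul0mx add0r.
  move: hv; rewrite hvw /L mulmxDr mulmxDl !mulmxA.
  by rewrite -(mulmxA (w *m Dl)) hDd mulmx0 addr0.
rewrite hvw /L mulmxDr !mulmxA hwd mul0mx add0r; exact: submxMl.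
Qed.

Lemma kerdl npp (D0 : 'M[C]_(npp, np)) (Dl0 : 'M[C]_(np, npp)) :
  dl *m Dl = 0 -> Dl *m Dl0 = 0 -> D *m Dl + Dl0 *m D0 \in unitmx ->
  forall s (v : 'M[C]_(s, n)), v *m Dl = 0 -> (v <= dl)%MS.
Proof.
move=> hdlDl hDlDl0 hLp s v hv.
set w := v *m invmx L.
have hvw : v = w *m L by rewrite /w mulmxKV.
have hwd : w *m Dl = 0.
  apply: (can_inj (mulmxK hLp)); rewrite mul0mx mulmxDr !mulmxA.
  rewrite -(mulmxA w Dl Dl0) hDlDl0 mulmx0 mul0mx addr0.
  move: hv; rewrite hvw /L mulmxDr mulmxDl !mulmxA.
  by rewrite -(mulmxA (w *m d)) hdlDl mulmx0 add0r.
rewrite hvw /L mulmxDr !mulmxA hwd mul0mx addr0; exact: submxMl.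
Qed.
End Gen.

Lemma compl_image m0 a x b (c0 : 'M[C]_(m0, a)) (X : 'M[C]_(x, a)) (Y : 'M[C]_(a, b)) :
  row_free c0 -> (c0 :&: X <= (0 : 'M_a))%MS -> (1%:M <= c0 + X)%MS ->
  X *m Y = 0 -> (forall s (v : 'M[C]_(s, a)), v *m Y = 0 -> (v <= X)%MS) ->
  row_free (c0 *m Y) /\ (Y <= c0 *m Y)%MS.
Proof.
move=> f0 hc hs hXY hker; split.
  apply: inj_row_free => v; rewrite mulmxA => /hker hvX.
  have : (v *m c0 <= (0 : 'M_a))%MS.
    by apply: submx_trans hc; rewrite sub_capmx hvX submxMl.
  rewrite submx0 => /eqP h.
  by apply: (row_free_inj f0); rewrite h mul0mx.
case/sub_addsmxP: hs => [[u1 u2] /= hu].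
apply/submxP; exists u1.
by rewrite -{1}(mul1mx Y) hu mulmxDl -(mulmxA u2) hXY mulmx0 addr0 mulmxA.
Qed.

Lemma decomp s a b n (M : 'M[C]_(s, n)) (S1 : 'M[C]_(a, n)) (S2 : 'M[C]_(b, n)) :
  (1%:M <= S1 + S2)%MS -> exists U B, M = U *m S1 + B *m S2.
Proof.
move=> hs; have : (M <= S1 + S2)%MS by apply: submx_trans hs; apply: submx1.
by case/sub_addsmxP => [[u1 u2] /= hu]; exists u1, u2.
Qed.

Lemma sqdet_mull' r s c (M : 'M[C]_(r, s)) (X : 'M[C]_(s, c)) :
  sqdet M != 0 -> sqdet (M *m X) = sqdet M * sqdet X.
Proof.
move=> hM; have e := @sqdet_eq _ _ M hM; subst r.
rewrite sqdet_sq; case: (s =P c) => [e|ne].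
  by subst c; rewrite !sqdet_sq det_mulmx.
by rewrite !sqdet_neq // mulr0.
Qed.

Lemma sqdet00 a b (A : 'M[C]_(a, b)) : a = 0%N -> b = 0%N -> sqdet A = 1.
Proof. by move=> ea eb; subst a b; rewrite sqdet_sq det_mx00. Qed.

Lemma det_sz0 a (A : 'M[C]_a) : a = 0%N -> \det A = 1.
Proof. by move=> ea; subst a; rewrite det_mx00. Qed.

Lemma det_of_blocks a m n (cd : 'M[C]_(a, n)) (c : 'M[C]_(m, n)) (L : 'M[C]_n)
  (Pp : 'M[C]_a) (P : 'M[C]_m) (G : 'M[C]_(m, a)) :
  cd *m L = Pp *m cd -> c *m L = G *m cd + P *m c ->
  sqdet (col_mx cd c) != 0 -> \det L = \det Pp * \det P.
Proof.
move=> h1 h2 hS.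
have : sqdet (col_mx cd c *m L) = sqdet (block_mx Pp 0 G P *m col_mx cd c).
  by rewrite mul_col_mx h1 h2 mul_block_col mul0mx addr0.
rewrite sqdet_mulr sqdet_mull // sqdet_lblock sqdet_sq mulrC => /mulIf; apply.
exact: hS.
Qed.

Lemma sgnz_step (p : int) (k : nat) :
  sgnz (p + k.+1%:Z) = - sgnz (p + k%:Z).
Proof.
have -> : (p + k.+1%:Z) = (p + k%:Z) + 1 by rewrite -addrA -PoszD addn1.
by rewrite /sgnz exprzDr ?unitrN1 // expr1z mulrN1.
Qed.

Section Concrete.
Variable n : nat -> nat.
Variable d : forall k, 'M[C]_(n k, n k.+1).
Variable delta : forall k, 'M[C]_(n k.+1, n k).
Hypothesis hd2 : forall k, d k *m d k.+1 = 0.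
Hypothesis hdelta2 : forall k, delta k.+1 *m delta k = 0.
Hypothesis hinv : forall k, bracket d delta k \in unitmx.

Definition np k := if k is j.+1 then n j else 0%N.
Definition dprev k : 'M[C]_(np k, n k) :=
  match k return 'M[C]_(np k, n k) with 0 => 0 | j.+1 => d j end.
Definition deltaprev k : 'M[C]_(n k, np k) :=
  match k return 'M[C]_(n k, np k) with 0 => 0 | j.+1 => delta j end.

Lemma bracketE k : bracket d delta k = d k *m delta k + deltaprev k *m dprev k.
Proof. by case: k => [|k] //=; rewrite mul0mx addr0. Qed.

Lemma hDd k : dprev k *m d k = 0.
Proof. by case: k => [|k] /=; [rewrite mul0mx | apply: hd2]. Qed.

Lemma hdlDl k : delta k *m deltaprev k = 0.
Proof. by case: k => [|k] /=; [rewrite mulmx0 | apply: hdelta2]. Qed.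

Lemma hLu k : d k *m delta k + deltaprev k *m dprev k \in unitmx.
Proof. by rewrite -bracketE; apply: hinv. Qed.

Lemma kerD k s (v : 'M[C]_(s, n k)) : v *m d k = 0 -> (v <= dprev k)%MS.
Proof.
apply: (kerd (hLu k) (hDd k) (hd2 k)).
exact: (hLu k.+1).
Qed.

Lemma kerDl k s (v : 'M[C]_(s, n k)) : v *m deltaprev k = 0 -> (v <= delta k)%MS.
Proof.
case: k v => [|j] v hv.
  apply: (kerdl (hLu 0) (hdlDl 0) (D0 := 0 : 'M[C]_(0, 0)) (Dl0 := 0)) hv.
    by rewrite mulmx0.
  by rewrite unitmxE det_mx00 unitr1.
apply: (kerdl (hLu j.+1) (hdlDl j.+1) (D0 := dprev j) (Dl0 := deltaprev j)) hv.
  exact: hdlDl.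
exact: hLu.
Qed.

Lemma imdE1 k : (imd d k <= dprev k)%MS.
Proof. by case: k => [|k] /=; [rewrite sub0mx | rewrite genmxE]. Qed.
Lemma imdE2 k : (dprev k <= imd d k)%MS.
Proof. by case: k => [|k] /=; [rewrite sub0mx | rewrite genmxE]. Qed.
Lemma imdeltaE1 k : (imdelta delta k <= delta k)%MS.
Proof. by rewrite /imdelta genmxE. Qed.
Lemma imdeltaE2 k : (delta k <= imdelta delta k)%MS.
Proof. by rewrite /imdelta genmxE. Qed.


Variables (m m' : nat -> nat).
Variable c : forall k, 'M[C]_(m k, n k).
Variable r : forall k, 'M[C]_(m' k, n k).
Hypothesis hc : forall k, compl_basis (c k) (imd d k).
Hypothesis hr : forall k, compl_basis (r k) (imdelta delta k).

Lemma hc_free k : row_free (c k). Proof. by case: (hc k). Qed.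
Lemma hc_cap k : (c k :&: dprev k <= (0 : 'M_(n k)))%MS.
Proof. by case: (hc k) => _ h _; apply: (submx_trans _ h); apply: capmxS (submx_refl _) (imdE2 k). Qed.
Lemma hc_sum k : (1%:M <= c k + dprev k)%MS.
Proof. by case: (hc k) => _ _ h; apply: (submx_trans h); apply: addsmxS (submx_refl _) (imdE1 k). Qed.
Lemma hr_free k : row_free (r k). Proof. by case: (hr k). Qed.
Lemma hr_cap k : (r k :&: delta k <= (0 : 'M_(n k)))%MS.
Proof. by case: (hr k) => _ h _; apply: (submx_trans _ h); apply: capmxS (submx_refl _) (imdeltaE2 k). Qed.
Lemma hr_sum k : (1%:M <= r k + delta k)%MS.
Proof. by case: (hr k) => _ _ h; apply: (submx_trans h); apply: addsmxS (submx_refl _) (imdeltaE1 k). Qed.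

Definition mp k := if k is j.+1 then m j else 0%N.
Definition cprev k : 'M[C]_(mp k, np k) :=
  match k return 'M[C]_(mp k, np k) with 0 => 0 | j.+1 => c j end.
Definition cd k : 'M[C]_(mp k, n k) := cprev k *m dprev k.
Definition rd k : 'M[C]_(m' k.+1, n k) := r k.+1 *m delta k.

Lemma cd_prop k : row_free (cd k) /\ (dprev k <= cd k)%MS.
Proof.
case: k => [|j].
  by rewrite /cd /= mul0mx /row_free mxrank0 sub0mx.
apply: (compl_image (hc_free j) (hc_cap j) (hc_sum j) (hDd j)).
exact: kerD.
Qed.

Lemma rd_prop k : row_free (rd k) /\ (delta k <= rd k)%MS.
Proof.
apply: (compl_image (hr_free k.+1) (hr_cap k.+1) (hr_sum k.+1) (hdelta2 k)).
exact: (@kerDl k.+1).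
Qed.

Lemma cd_sub k : (cd k <= dprev k)%MS. Proof. exact: submxMl. Qed.
Lemma rd_sub k : (rd k <= delta k)%MS. Proof. exact: submxMl. Qed.

Definition Xs k := sqdet (col_mx (cd k) (c k)).
Definition Ys k := sqdet (col_mx (r k) (rd k)).
Definition Ws k := sqdet (col_mx (cd k) (rd k)).

Lemma Ws_neq0 k : Ws k != 0.
Proof.
case: (cd_prop k) => f1 s1; case: (rd_prop k) => f2 s2.
apply: sqdet_dsum => //.
  apply: (submx_trans _ (dcap (hLu k) (hDd k) (hdlDl k))).
  exact: capmxS (cd_sub k) (rd_sub k).
apply: (submx_trans (dsum (hLu k))); exact: addsmxS.
Qed.

Lemma Xs_neq0 k : Xs k != 0.
Proof.
case: (cd_prop k) => f1 s1.
apply: sqdet_dsum => //; first exact: hc_free.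
  rewrite capmxC; apply: (submx_trans _ (hc_cap k)).
  exact: capmxS (submx_refl _) (cd_sub k).
rewrite addsmxC; apply: (submx_trans (hc_sum k)); exact: addsmxS (submx_refl _) s1.
Qed.

Lemma Ys_neq0 k : Ys k != 0.
Proof.
case: (rd_prop k) => f2 s2.
apply: sqdet_dsum => //; first exact: hr_free.
  apply: (submx_trans _ (hr_cap k)).
  exact: capmxS (submx_refl _) (rd_sub k).
apply: (submx_trans (hr_sum k)); exact: addsmxS (submx_refl _) s2.
Qed.


Lemma Xs_rel k U B : c k = U *m cd k + B *m rd k -> Xs k = sqdet B * Ws k.
Proof. by move=> e; rewrite /Xs e sqdet_colU //; apply: Ws_neq0. Qed.

Lemma Ys_rel k A V : r k = A *m cd k + V *m rd k -> Ys k = sqdet A * Ws k.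
Proof. by move=> e; rewrite /Ys e sqdet_colA //; apply: Ws_neq0. Qed.

Lemma rel_d k U B A V P Q :
  c k = U *m cd k + B *m rd k -> r k.+1 = A *m cd k.+1 + V *m rd k.+1 ->
  c k *m d k *m delta k = P *m c k + Q *m cd k -> B *m A *m P = 1%:M.
Proof.
move=> ec er eP.
have hrd : rd k = A *m (P *m c k + Q *m cd k).
  rewrite -eP {1}/rd er mulmxDl /rd -(mulmxA V) -(mulmxA (r k.+2)) hdelta2.
  by rewrite mulmx0 mulmx0 addr0 /cd /= !mulmxA.
have e2 : (1%:M - B *m A *m P) *m c k = (U + B *m A *m Q) *m cd k.
  rewrite mulmxBl mul1mx {1}ec hrd !mulmxDr !mulmxDl !mulmxA.
  set X := B *m A *m P *m c k; set Y := B *m A *m Q *m cd k.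
  by rewrite addrCA [LHS]addrC addKr.
have h0 : ((1%:M - B *m A *m P) *m c k <= (0 : 'M_(n k)))%MS.
  apply: (submx_trans _ (hc_cap k)); rewrite sub_capmx submxMl /=.
  by rewrite e2; apply: (submx_trans (submxMl _ _)); apply: cd_sub.
move: h0; rewrite submx0 => /eqP h0.
have : (1%:M - B *m A *m P) = 0.
  by apply: (row_free_inj (hc_free k)); rewrite h0 mul0mx.
by move/subr0_eq.
Qed.

Lemma rel_det k U B A V P Q :
  c k = U *m cd k + B *m rd k -> r k.+1 = A *m cd k.+1 + V *m rd k.+1 ->
  c k *m d k *m delta k = P *m c k + Q *m cd k ->
  (Xs k / Ws k) * (Ys k.+1 / Ws k.+1) * \det P = 1.
Proof.
move=> ec er eP.
have hW := Ws_neq0 k; have hW' := Ws_neq0 k.+1.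
have hB : sqdet B = Xs k / Ws k by rewrite (Xs_rel ec) mulfK.
have hA : sqdet A = Ys k.+1 / Ws k.+1 by rewrite (Ys_rel er) mulfK.
have hB0 : sqdet B != 0 by rewrite hB mulf_neq0 ?invr_eq0 ?Xs_neq0.
rewrite -hB -hA -sqdet_mull' // sqdet_sq -det_mulmx (rel_d ec er eP).
exact: det1.
Qed.

Lemma cL_rel k P Q : c k *m d k *m delta k = P *m c k + Q *m cd k ->
  exists G, c k *m bracket d delta k = G *m cd k + P *m c k.
Proof.
move=> eP.
have : (c k *m deltaprev k *m dprev k <= cd k)%MS.
  apply: (submx_trans (submxMl _ _)); exact: (cd_prop k).2.
case/submxP => G' hG; exists (Q + G').
rewrite bracketE mulmxDr !mulmxA eP hG [(Q + G') *m _]mulmxDl.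
rewrite -addrA addrC.
by rewrite /cd mulmxDl !mulmxA.
Qed.

Lemma detL0 P Q : c 0 *m d 0 *m delta 0 = P *m c 0 + Q *m cd 0 ->
  \det (bracket d delta 0) = \det P.
Proof.
move=> eP; case: (cL_rel eP) => G hG.
rewrite (@det_of_blocks _ _ _ (cd 0) (c 0) _ (0 : 'M_0) P G) ?det_mx00 ?mul1r //.
  by rewrite [LHS]flatmx0 [RHS]flatmx0.
exact: Xs_neq0.
Qed.

Lemma detLS j P' Q' P Q : c j *m d j *m delta j = P' *m c j + Q' *m cd j ->
  c j.+1 *m d j.+1 *m delta j.+1 = P *m c j.+1 + Q *m cd j.+1 ->
  \det (bracket d delta j.+1) = \det P' * \det P.
Proof.
move=> eP' eP; case: (cL_rel eP) => G hG.
apply: (@det_of_blocks _ _ _ (cd j.+1) (c j.+1) _ P' P G) => //; last exact: Xs_neq0.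
rewrite /= /cd /= mulmxDr !mulmxA -(mulmxA (c j) (d j)) hd2 mulmx0 mul0mx add0r.
rewrite eP' mulmxDl /cd -!mulmxA hDd !mulmx0 addr0.
by [].
Qed.


Definition al k := Ys k / Ws k.
Definition be k := Xs k / Ws k.
Definition pi k := (be k * al k.+1)^-1.

Lemma al_neq0 k : al k != 0.
Proof. by rewrite /al mulf_neq0 ?invr_eq0 ?Ys_neq0 ?Ws_neq0. Qed.
Lemma be_neq0 k : be k != 0.
Proof. by rewrite /be mulf_neq0 ?invr_eq0 ?Xs_neq0 ?Ws_neq0. Qed.
Lemma pi_neq0 k : pi k != 0.
Proof. by rewrite /pi invr_eq0 mulf_neq0 ?al_neq0 ?be_neq0. Qed.

Lemma exUB k : exists U B, c k = U *m cd k + B *m rd k.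
Proof.
apply: decomp; apply: (submx_trans (dsum (hLu k))).
exact: addsmxS (cd_prop k).2 (rd_prop k).2.
Qed.
Lemma exAV k : exists A V, r k = A *m cd k + V *m rd k.
Proof.
apply: decomp; apply: (submx_trans (dsum (hLu k))).
exact: addsmxS (cd_prop k).2 (rd_prop k).2.
Qed.
Lemma exPQ k : exists P Q, c k *m d k *m delta k = P *m c k + Q *m cd k.
Proof.
apply: decomp; apply: (submx_trans (hc_sum k)).
exact: addsmxS (submx_refl _) (cd_prop k).2.
Qed.

Lemma sqB k U B : c k = U *m cd k + B *m rd k -> sqdet B = be k.
Proof. by move=> e; rewrite /be (Xs_rel e) mulfK ?Ws_neq0. Qed.
Lemma sqA k A V : r k = A *m cd k + V *m rd k -> sqdet A = al k.
Proof. by move=> e; rewrite /al (Ys_rel e) mulfK ?Ws_neq0. Qed.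

Lemma detP k P Q : c k *m d k *m delta k = P *m c k + Q *m cd k -> \det P = pi k.
Proof.
move=> eP; case: (exUB k) => U [B eB]; case: (exAV k.+1) => A [V eA].
have := rel_det eB eA eP; rewrite -/(be k) -/(al k.+1) => h.
by rewrite /pi -[_^-1]mulr1 -h mulKf // mulf_neq0 ?al_neq0 ?be_neq0.
Qed.

Lemma detL k : \det (bracket d delta k) = fprev pi k * pi k.
Proof.
case: k => [|j].
  by case: (exPQ 0) => P [Q eP]; rewrite (detL0 eP) (detP eP) /= mul1r.
case: (exPQ j) => P' [Q' eP']; case: (exPQ j.+1) => P [Q eP].
by rewrite (detLS eP' eP) (detP eP') (detP eP).
Qed.

Lemma al0 : al 0 = 1.
Proof.
case: (exAV 0) => A [V eA]; rewrite -(sqA eA).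
apply: sqdet00 => //; apply: (@sqdet_eq _ _ A).
by rewrite (sqA eA) al_neq0.
Qed.

Section Top.
Variable N : nat.
Hypothesis hn : forall k, (N < k)%N -> n k = 0%N.

Lemma m'N : m' N.+1 = 0%N.
Proof.
have h : (m' N.+1 <= n N.+1)%N.
  by rewrite -{1}(eqP (hr_free N.+1)) rank_leq_col.
by move: h; rewrite hn // leqn0 => /eqP.
Qed.

Lemma mN : m N = 0%N.
Proof.
case: (exUB N) => U [B eB].
have h : sqdet B != 0 by rewrite (sqB eB) be_neq0.
rewrite (@sqdet_eq _ _ B h); exact: m'N.
Qed.

Lemma alN : al N.+1 = 1.
Proof. by case: (exAV N.+1) => A [V eA]; rewrite -(sqA eA); apply: sqdet00; [exact: m'N | exact: mN]. Qed.

Lemma piN : pi N = 1.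
Proof. by case: (exPQ N) => P [Q eP]; rewrite -(detP eP); apply: det_sz0; exact: mN. Qed.
End Top.


Section Final.
Variables (N : nat) (p : int).
Hypothesis hn : forall k, (N < k)%N -> n k = 0%N.

Let s k := sgnz (p + k%:Z).
Let f k := pi k ^ s k.
Let h k := al k ^ s k.

Lemma f_neq0 k : f k != 0. Proof. exact: expfz_neq0 (pi_neq0 k). Qed.
Lemma h_neq0 k : h k != 0. Proof. exact: expfz_neq0 (al_neq0 k). Qed.

Lemma flip (x : C) k : x ^ s k.+1 = (x ^ s k)^-1.
Proof. by rewrite /s sgnz_step invr_expz. Qed.

Lemma F1 k : (fprev pi k * pi k) ^ s k = (fprev f k)^-1 * f k.
Proof.
case: k => [|j] /=; first by rewrite mul1r invr1 mul1r.
by rewrite expfzMl flip.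
Qed.

Lemma fN : f N = 1. Proof. by rewrite /f (piN hn) exp1rz. Qed.

Lemma prod_one : \prod_(k < N.+1) (\det (bracket d delta k)) ^ sgnz (p + k%:Z) = 1.
Proof.
rewrite (eq_bigr (fun k : 'I_N.+1 => (fprev f k)^-1 * f k)); last first.
  by move=> k _; rewrite detL -F1.
by rewrite T3 ?fN //; apply: f_neq0.
Qed.

Lemma XY k : Xs k / Ys k = (al k * al k.+1 * pi k)^-1.
Proof.
rewrite /pi /al /be.
have := Xs_neq0 k; have := Ys_neq0 k; have := Ws_neq0 k;
have := Ys_neq0 k.+1; have := Ws_neq0 k.+1 => h1 h2 h3 h4 h5.
by field; rewrite ?h1 ?h2 ?h3 ?h4 ?h5.
Qed.

Lemma tauE : tau_d d p N c / tau_delta delta p N r =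
  \prod_(k < N.+1) (\det (bracket d delta k)) ^ (sgnz (p + k%:Z) * (p + k%:Z)).
Proof.
have hX k : tau_d_factor d c k = Xs k.
  by case: k => [|j] //; rewrite /Xs sqdet_col0.
rewrite /tau_d /tau_delta -prodf_div.
rewrite (eq_bigr (fun k : 'I_N.+1 => (h k)^-1 * h k.+1 * (f k)^-1)); last first.
  move=> k _; rewrite hX /tau_delta_factor -/(Ys k) expfV -expfzMl -/(s k) XY.
  rewrite -expfV (expfzMl (al k * al k.+1)) (expfzMl (al k)) /h /f flip.
  have := expfz_neq0 (s k) (al_neq0 k.+1); have := expfz_neq0 (s k) (al_neq0 k);
  have := expfz_neq0 (s k) (pi_neq0 k) => h1 h2 h3.
  by field; rewrite ?h1 ?h2 ?h3.
rewrite T1; [|exact: h_neq0|exact: f_neq0].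
rewrite /h al0 (alN hn) !exp1rz invr1 !mul1r.
rewrite [RHS](eq_bigr (fun k : 'I_N.+1 => ((fprev f k)^-1 * f k) ^ (p + k%:Z))); last first.
  by move=> k _; rewrite -exprz_exp detL F1.
rewrite T2; last exact: f_neq0.
by rewrite big_ord_recr /= fN exp1rz mul1r invr1 mulr1.
Qed.

Lemma tau_delta_neq0 : tau_delta delta p N r != 0.
Proof.
rewrite /tau_delta; apply/prodf_neq0 => k _.
exact: expfz_neq0 (Ys_neq0 k).
Qed.

End Final.

End Concrete.

Lemma compl_exists (n : nat -> nat) k (A : 'M[C]_(n k)) :
  compl_basis (n := n) (k := k) (row_base (A^C)%MS) A.
Proof.
split; first exact: row_base_free.
  rewrite capmxC -(capmx_compl A); apply: capmxS (submx_refl _) _.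
  by rewrite eq_row_base.
rewrite addsmxC; apply: (submx_trans (_ : 1%:M <= A + A^C)%MS).
  by rewrite sub1mx addsmx_compl_full.
by apply: addsmxS (submx_refl _) _; rewrite eq_row_base.
Qed.

Unset Implicit Arguments.
Theorem mainTheorem16 (p : int) (N : nat) (n : nat -> nat)
  (d : forall k, 'M[C]_(n k, n k.+1)) (delta : forall k, 'M[C]_(n k.+1, n k))
  (hn : forall k, (N < k)%N -> n k = 0%N)
  (hd2 : forall k, d k *m d k.+1 = 0)
  (hdelta2 : forall k, delta k.+1 *m delta k = 0)
  (hinv : forall k, bracket d delta k \in unitmx) :
  [/\ \prod_(k < N.+1) (\det (bracket d delta k)) ^ sgnz (p + k%:Z) = 1,
      forall (m m' : nat -> nat) (c : forall k, 'M[C]_(m k, n k))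
             (r : forall k, 'M[C]_(m' k, n k)),
        (forall k, compl_basis (c k) (imd d k)) ->
        (forall k, compl_basis (r k) (imdelta delta k)) ->
        tau_d d p N c / tau_delta delta p N r
        = \prod_(k < N.+1)
            (\det (bracket d delta k)) ^ (sgnz (p + k%:Z) * (p + k%:Z))
    & (forall k, bracket d delta k = 1%:M) ->
      forall (m m' : nat -> nat) (c : forall k, 'M[C]_(m k, n k))
             (r : forall k, 'M[C]_(m' k, n k)),
        (forall k, compl_basis (c k) (imd d k)) ->
        (forall k, compl_basis (r k) (imdelta delta k)) ->
        tau_d d p N c = tau_delta delta p N r].
Proof.
split.
- have hc0 := fun k => compl_exists (imd d k).
  have hr0 := fun k => compl_exists (imdelta delta k).
  exact: (prod_one hd2 hdelta2 hinv hc0 hr0 p hn).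
- move=> m m' c r hc hr; exact: (tauE hd2 hdelta2 hinv hc hr p hn).
- move=> h1 m m' c r hc hr.
  have := tauE hd2 hdelta2 hinv hc hr p hn.
  rewrite big1; last by move=> k _; rewrite h1 det1 exp1rz.
  have hne := tau_delta_neq0 hdelta2 hinv hr N p.
  by move=> e; rewrite -(divfK hne (tau_d d p N c)) e mul1r.
Qed.
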